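(* Let $\beta,\beta'\in\mathcal Q(\Phi_+)$ be such that $I_1(\beta)=I_1(\beta')$, $I_2(\beta)\cap I_2(\beta')=\emptyset$, and $a_{i,i'}=0$ for all $i\in I_2(\beta)$, $i'\in I_2(\beta')$. Then there exists $\beta''\in\mathcal Q(\Phi_+)$ with $\beta''^\vee=\beta^\vee+\beta'^\vee-\sum_{i\in I_1(\beta)}\alpha_i^\vee$; equivalently $I_n(\beta'')=I_n(\beta)\cup I_n(\beta')$ for all $n\ge1$.
   Context: Kac–Moody root datum $(A,X,Y,(\alpha_i)_{i\in I},(\alpha_i^\vee)_{i\in I})$, generalized Cartan matrix $A=(a_{i,j})$ with $\langle\alpha_i^\vee,\alpha_j\rangle=a_{i,j}$, simple reflections $r_i$, $W^v=\langle r_i\rangle$, $\Phi=W^v\{\alpha_i\}$, $\Phi_+=\Phi\cap\bigoplus\mathbb Z_{\ge0}\alpha_i$; coroot $\beta^\vee=w(\alpha_i^\vee)$ and $s_\beta=wr_iw^{-1}$ for $\beta=w(\alpha_i)$. For $\beta\in\Phi_+$ write $\beta^\vee=\sum N_i(\beta)\alpha_i^\vee$ and $I_n(\beta)=\{i\in I\mid N_i(\beta)\ge n\}$. $\mathrm{Inv}(w)=\{\alpha\in\Phi_+\mid w\alpha\in\Phi_-\}$; $\beta\in\Phi_+$ is quantum if $\langle\beta^\vee,\gamma\rangle=1$ for all $\gamma\in\mathrm{Inv}(s_\beta)\setminus\{\beta\}$; $\mathcal Q(\Phi_+)$ is the set of quantum roots. *)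

(* Defs.v *)
(* Real roots of a Kac-Moody root datum, encoded in the
   formal root lattice Q = (+)_i Z alpha_i and coroot lattice
   Q^v = (+)_i Z alpha_i^v, both represented as {ffun I -> int}. *)
From mathcomp Require Import all_boot all_order all_algebra.
Set Implicit Arguments. Unset Strict Implicit. Unset Printing Implicit Defensive.
Import Order.TTheory GRing.Theory Num.Theory.
Local Open Scope ring_scope.

Section KM.
Variable I : finType.
(* A i j = a_{i,j} = <alpha_i^v, alpha_j> *)
Variable A : I -> I -> int.

Definition is_GCM : Prop :=
  (forall i, A i i = 2) /\
  (forall i j, i != j -> A i j <= 0) /\
  (forall i j, A i j = 0 <-> A j i = 0).

Definition vec := {ffun I -> int}.

(* alpha_i in Q, resp. alpha_i^v in Q^v (same coordinates) *)
Definition sbasis (i : I) : vec := [ffun j => (j == i)%:R].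

(* <u, v> for u in Q^v, v in Q *)
Definition pairing (u v : vec) : int := \sum_(k : I) \sum_(l : I) u k * A k l * v l.

Definition refl (i : I) (v : vec) : vec :=
  [ffun j => v j - pairing (sbasis i) v * sbasis i j].
Definition corefl (i : I) (u : vec) : vec :=
  [ffun j => u j - pairing u (sbasis i) * sbasis i j].

(* an element of W^v given as a word [:: i1; ...; ik] = r_i1 ... r_ik *)
Definition act (w : seq I) (v : vec) : vec := foldr refl v w.
Definition coact (w : seq I) (u : vec) : vec := foldr corefl u w.
Definition conj_word (w : seq I) (i : I) : seq I := w ++ i :: rev w.

Definition is_root (b : vec) : Prop := exists w i, b = act w (sbasis i).
Definition nonneg_vec (v : vec) : Prop := forall j, 0 <= v j.
Definition nonpos_vec (v : vec) : Prop := forall j, v j <= 0.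
Definition pos_root (b : vec) : Prop := is_root b /\ nonneg_vec b.
Definition neg_root (b : vec) : Prop := is_root b /\ nonpos_vec b.

Definition coroot_of (b c : vec) : Prop :=
  exists w i, b = act w (sbasis i) /\ c = coact w (sbasis i).

(* b quantum: b in Phi_+ and for every gamma in Inv(s_b) \ {b},
   <b^v, gamma> = 1, where s_b = w r_i w^{-1}, b^v = w(alpha_i^v)
   for (any) presentation b = w(alpha_i). *)
Definition is_quantum (b : vec) : Prop :=
  pos_root b /\
  forall w i, b = act w (sbasis i) ->
    forall g, pos_root g -> neg_root (act (conj_word w i) g) -> g <> b ->
      pairing (coact w (sbasis i)) g = 1.

(* I_n(b) computed from the coroot coordinates c = b^v *)
Definition In_set (n : nat) (c : vec) : {set I} := [set i | (n%:Z <= c i)%R].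

End KM.

(* Main.v *)
Require Import Defs.
From mathcomp Require Import all_boot all_order all_algebra.
From mathcomp Require Import zify ring.
From Stdlib Require Import ClassicalEpsilon.
Set Implicit Arguments. Unset Strict Implicit. Unset Printing Implicit Defensive.
Import Order.TTheory GRing.Theory Num.Theory.
Local Open Scope ring_scope.

Section Basics.
Variable I : finType.
Implicit Types (M : I -> I -> int) (u v : vec I) (w : seq I).

Definition At M : I -> I -> int := fun i j => M j i.
Definition lc (x : int) (v1 : vec I) (y : int) (v2 : vec I) : vec I :=
  [ffun j => x * v1 j + y * v2 j].

Lemma sbE (i j : I) : sbasis i j = (j == i)%:R.
Proof. by rewrite ffunE. Qed.

Lemma pairing_sbl M i v : pairing M (sbasis i) v = \sum_l M i l * v l.
Proof.
rewrite /pairing (bigD1 i) //= [X in _ + X]big1 ?addr0.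
  by apply: eq_bigr => l _; rewrite sbE eqxx mul1r.
by move=> k /negbTE nk; rewrite big1 // => l _; rewrite sbE nk !mul0r.
Qed.

Lemma pairing_sbr M u i : pairing M u (sbasis i) = \sum_k u k * M k i.
Proof.
rewrite /pairing; apply: eq_bigr => k _.
rewrite (bigD1 i) //= big1 ?addr0; first by rewrite sbE eqxx mulr1.
by move=> l /negbTE nl; rewrite sbE nl mulr0.
Qed.

Lemma pairingT M u v : pairing (At M) u v = pairing M v u.
Proof.
rewrite /pairing [RHS]exchange_big; apply: eq_bigr => k _; apply: eq_bigr => l _.
rewrite /At; ring.
Qed.

Lemma corefl_At M i u : corefl M i u = refl (At M) i u.
Proof. by apply/ffunP => j; rewrite !ffunE pairingT. Qed.

Lemma coact_At M w u : coact M w u = act (At M) w u.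
Proof. by elim: w => //= a w IH; rewrite IH corefl_At. Qed.

Lemma AtK M : At (At M) = M.
Proof. by []. Qed.

Lemma reflE M i v j :
  refl M i v j = v j - (\sum_l M i l * v l) * (j == i)%:R.
Proof. by rewrite ffunE pairing_sbl sbE. Qed.

Lemma sum_lc M i x v1 y v2 :
  \sum_l M i l * lc x v1 y v2 l = x * (\sum_l M i l * v1 l) + y * (\sum_l M i l * v2 l).
Proof.
rewrite !mulr_sumr -big_split /=; apply: eq_bigr => l _; rewrite ffunE; ring.
Qed.

Lemma refl_lc M i x v1 y v2 :
  refl M i (lc x v1 y v2) = lc x (refl M i v1) y (refl M i v2).
Proof.
apply/ffunP => j; rewrite reflE sum_lc !ffunE !pairing_sbl; ring.
Qed.

Lemma act_lc M w x v1 y v2 :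
  act M w (lc x v1 y v2) = lc x (act M w v1) y (act M w v2).
Proof. by elim: w => //= a w IH; rewrite IH refl_lc. Qed.

Lemma act_cat M w1 w2 v : act M (w1 ++ w2) v = act M w1 (act M w2 v).
Proof. by rewrite /act foldr_cat. Qed.

Lemma act_cons M a w v : act M (a :: w) v = refl M a (act M w v).
Proof. by []. Qed.

Lemma act_rcons M w a v : act M (rcons w a) v = act M w (refl M a v).
Proof. by rewrite -cats1 act_cat. Qed.

Lemma sum_delta (F : I -> int) i : \sum_l F l * (l == i)%:R = F i.
Proof.
rewrite (bigD1 i) //= eqxx mulr1 big1 ?addr0 // => l /negbTE ->; by rewrite mulr0.
Qed.

Lemma pairingE M u v : pairing M u v = \sum_k u k * (\sum_l M k l * v l).
Proof. by apply: eq_bigr => k _; rewrite mulr_sumr; apply: eq_bigr => l _; rewrite mulrA. Qed.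

Lemma sum_refl M i v k :
  \sum_l M k l * refl M i v l = \sum_l M k l * v l - (\sum_l M i l * v l) * M k i.
Proof.
rewrite (eq_bigr (fun l => M k l * v l - ((\sum_l M i l * v l) * M k l) * (l == i)%:R)).
  by rewrite sumrB sum_delta.
by move=> l _; rewrite reflE; ring.
Qed.

Lemma refl_invol M i v : M i i = 2 -> refl M i (refl M i v) = v.
Proof.
move=> hM; apply/ffunP => j; rewrite reflE sum_refl hM reflE; ring.
Qed.

Lemma act_rev_invol M w v : (forall i, M i i = 2) -> act M (rev w) (act M w v) = v.
Proof.
move=> hM; elim: w v => //= a w IH v.
by rewrite rev_cons act_rcons refl_invol // IH.
Qed.

Lemma pairing_inv M i u v : M i i = 2 ->
  pairing M (corefl M i u) (refl M i v) = pairing M u v.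
Proof.
move=> hM; rewrite !pairingE.
set P := \sum_l M i l * v l.
set Q := \sum_k u k * M k i.
rewrite (eq_bigr (fun k => u k * (\sum_l M k l * v l) - P * (u k * M k i)
   - (Q * ((\sum_l M k l * v l) - P * M k i)) * (k == i)%:R)).
  by rewrite !sumrB sum_delta -mulr_sumr -/Q hM /P; ring.
move=> k _; rewrite sum_refl ffunE pairing_sbr sbE -/P -/Q; ring.
Qed.

Lemma pairing_adj M i u v : M i i = 2 ->
  pairing M u (refl M i v) = pairing M (corefl M i u) v.
Proof.
by move=> hM; rewrite -{2}(@refl_invol M i v hM) pairing_inv.
Qed.

Lemma pairing_inv_act M w u v : (forall i, M i i = 2) ->
  pairing M (coact M w u) (act M w v) = pairing M u v.
Proof. by move=> hM; elim: w => //= a w IH; rewrite pairing_inv. Qed.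

Lemma conj_word_cons w a i : conj_word (a :: w) i = a :: rcons (conj_word w i) a.
Proof. by rewrite /conj_word /= rev_cons -rcons_cons rcons_cat. Qed.

Lemma conj_formula M w i v : (forall i, M i i = 2) ->
  act M (conj_word w i) v =
  lc 1 v (- pairing M (coact M w (sbasis i)) v) (act M w (sbasis i)).
Proof.
move=> hM; elim: w v => [|a w IH] v.
  by apply/ffunP => j; rewrite /= !ffunE; ring.
rewrite conj_word_cons act_cons act_rcons IH refl_lc refl_invol //.
by rewrite pairing_adj.
Qed.
End Basics.

Lemma nat_min (P : nat -> Prop) : (exists n, P n) ->
  exists n, P n /\ forall m, P m -> (n <= m)%N.
Proof.
move=> ex.
pose Pb := fun n => if excluded_middle_informative (P n) then true else false.
have PbP n : Pb n = true <-> P n.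
  by rewrite /Pb; case: excluded_middle_informative.
have exb : exists n, Pb n by case: ex => n Pn; exists n; apply/PbP.
exists (ex_minn exb); split.
  by apply/PbP; case: ex_minnP.
by move=> m /PbP Pm; case: ex_minnP => n _ /(_ m Pm).
Qed.

Section Eqv.
Variable I : finType.
Variable M : I -> I -> int.
Hypothesis hM : forall i, M i i = 2.
Implicit Types (u v : vec I) (w : seq I).

Definition eqv w1 w2 : Prop :=
  (forall v, act M w1 v = act M w2 v) /\ (forall v, act (At M) w1 v = act (At M) w2 v).

Lemma eqv_refl w : eqv w w. Proof. by []. Qed.
Lemma eqv_sym w1 w2 : eqv w1 w2 -> eqv w2 w1.
Proof. by case=> h1 h2; split=> v; rewrite ?h1 ?h2. Qed.
Lemma eqv_trans w1 w2 w3 : eqv w1 w2 -> eqv w2 w3 -> eqv w1 w3.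
Proof. by case=> h1 h2 [h3 h4]; split=> v; rewrite ?h1 ?h2 ?h3 ?h4. Qed.
Lemma eqv_catl x w1 w2 : eqv w1 w2 -> eqv (x ++ w1) (x ++ w2).
Proof. by case=> h1 h2; split=> v; rewrite !act_cat ?h1 ?h2. Qed.
Lemma eqv_catr x w1 w2 : eqv w1 w2 -> eqv (w1 ++ x) (w2 ++ x).
Proof. by case=> h1 h2; split=> v; rewrite !act_cat ?h1 ?h2. Qed.
Lemma eqv_ii i : eqv [:: i; i] [::].
Proof.
split=> v /=; rewrite refl_invol //; exact: hM.
Qed.
Lemma eqv_cancel x y i : eqv (x ++ i :: i :: y) (x ++ y).
Proof.
apply: eqv_catl; rewrite -[y]cat0s -cat_cons -cat_cons; apply: eqv_catr.
exact: eqv_ii.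
Qed.

Definition Pl w n : Prop := exists w', eqv w' w /\ size w' = n.
Lemma Pl_ex w : exists n, Pl w n. Proof. by exists (size w), w. Qed.
Definition len w : nat :=
  ex_minn (ex_intro (fun n => (if excluded_middle_informative (Pl w n) then true else false) = true)
    (size w) (match excluded_middle_informative (Pl w (size w)) as o
        return ((if o then true else false) = true) with
      | left _ => erefl | right h => False_ind _ (h (ex_intro _ w (conj (eqv_refl w) erefl))) end)).

Lemma len_spec w : exists w', eqv w' w /\ size w' = len w.
Proof.
rewrite /len; case: ex_minnP => n; case: excluded_middle_informative => // h _ _; exact: h.
Qed.

Lemma len_min w w' : eqv w' w -> (len w <= size w')%N.
Proof.
move=> e; rewrite /len; case: ex_minnP => n _; apply.
by case: excluded_middle_informative => // h; case: h; exists w'.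
Qed.

Lemma len_size w : (len w <= size w)%N.
Proof. exact: len_min (eqv_refl w). Qed.

Lemma len_eqv w1 w2 : eqv w1 w2 -> len w1 = len w2.
Proof.
move=> e; apply/eqP; rewrite eqn_leq; apply/andP; split.
  case: (len_spec w2) => w' [e' <-]; apply: len_min; exact: eqv_trans e' (eqv_sym e).
case: (len_spec w1) => w' [e' <-]; apply: len_min; exact: eqv_trans e' e.
Qed.

Lemma len_cat x y : (len (x ++ y) <= len x + len y)%N.
Proof.
case: (len_spec x) => x' [ex <-]; case: (len_spec y) => y' [ey <-].
rewrite -size_cat; apply: len_min.
exact: eqv_trans (eqv_catr _ ex) (eqv_catl _ ey).
Qed.

Lemma len0 w : len w = 0%N -> eqv w [::].
Proof.
move=> h; case: (len_spec w) => w' [e]; rewrite h; move/size0nil => ?; subst.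
exact: eqv_sym.
Qed.

End Eqv.

Definition stepF (a b ps pt : int) (c : bool) (XY : int * int) : int * int :=
  if c then (- XY.1 - ps - a * XY.2, XY.2) else (XY.1, - XY.2 - pt - b * XY.1).
Definition Ff a b ps pt (bw : seq bool) := foldr (stepF a b ps pt) (0, 0) bw.

Fixpoint Eb (n : nat) : seq bool := if n is n'.+1 then odd n' :: Eb n' else [::].
Fixpoint Eb' (n : nat) : seq bool := if n is n'.+1 then ~~ odd n' :: Eb' n' else [::].

Definition mord (a b : int) : nat :=
  if a * b == 0 then 2 else if a * b == 1 then 3 else if a * b == 2 then 4 else 6.

Lemma vals_ab (a b : int) : a <= 0 -> b <= 0 -> (a == 0) = (b == 0) -> a * b <= 3 ->
  a \in [:: 0; -1; -2; -3] /\ b \in [:: 0; -1; -2; -3].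
Proof.
move=> ha hb hab h3; rewrite !inE.
case: (a =P 0) hab => [-> /esym/eqP -> //|a0 /esym/eqP b0].
split; lia.
Qed.

Lemma braidF a b ps pt : a <= 0 -> b <= 0 -> (a == 0) = (b == 0) -> a * b <= 3 ->
  Ff a b ps pt (Eb (mord a b)) = Ff a b ps pt (Eb' (mord a b)).
Proof.
move=> ha hb hab h3; case: (vals_ab ha hb hab h3).
rewrite !inE => /or4P [] /eqP ea /or4P [] /eqP eb; subst a b => //;
  rewrite /mord /Ff /=; congr pair; ring.
Qed.

Lemma posF a b L : a <= 0 -> b <= 0 -> (a == 0) = (b == 0) -> a * b <= 3 ->
  (L < mord a b)%N ->
  0 <= 1 + (Ff a b 2 b (Eb L)).1 /\ 0 <= (Ff a b 2 b (Eb L)).2.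
Proof.
move=> ha hb hab h3; case: (vals_ab ha hb hab h3).
rewrite !inE => /or4P [] /eqP ea /or4P [] /eqP eb; subst a b => //;
  rewrite /mord /=; do 6? (case: L => [|L] //=); rewrite /Ff /=; lia.
Qed.

Lemma posF_inf a b L : a <= 0 -> b <= 0 -> 4 <= a * b ->
  [/\ 0 <= 1 + (Ff a b 2 b (Eb L)).1, 0 <= (Ff a b 2 b (Eb L)).2 &
      if odd L then 2 * (1 + (Ff a b 2 b (Eb L)).1) <= - a * (Ff a b 2 b (Eb L)).2
      else 2 * (Ff a b 2 b (Eb L)).2 <= - b * (1 + (Ff a b 2 b (Eb L)).1)].
Proof.
move=> ha hb h4; elim: L => [|L [IH1 IH2 IH3]]; first by rewrite /Ff /=; split; lia.
rewrite /Ff /= -/(Ff a b 2 b (Eb L)).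
move: IH1 IH2 IH3; set X := (Ff a b 2 b (Eb L)).1; set Y := (Ff a b 2 b (Eb L)).2.
case: (odd L) => /= IH1 IH2 IH3; split; nia.
Qed.

Lemma size_Eb n : size (Eb n) = n. Proof. by elim: n => //= n ->. Qed.
Lemma size_Eb' n : size (Eb' n) = n. Proof. by elim: n => //= n ->. Qed.

Lemma Eb_suffix m k : exists pre, Eb (k + m) = pre ++ Eb m.
Proof.
elim: k => [|k [pre IH]]; first by exists [::].
by exists (odd (k + m) :: pre); rewrite addSn /= IH.
Qed.

Lemma Eb'_last n : exists z, Eb' n.+1 = rcons z true /\ size z = n.
Proof.
elim: n => [|n [z [IH sz]]]; first by exists [::].
exists (~~ odd n.+1 :: z); split; last by rewrite /= sz.
by change (Eb' n.+2) with (~~ odd n.+1 :: Eb' n.+1); rewrite IH.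
Qed.

Lemma Eb_char bw : sorted (fun x y : bool => x != y) bw -> last false bw = false ->
  bw = Eb (size bw).
Proof.
elim: bw => // c bw IH /= hp hl.
case: bw IH hp hl => [|c' bw] IH hp hl; first by move: hl => /= ->.
have hs := path_sorted hp.
have e := IH hs hl.
move: e hp; set n := size (c' :: bw) => e; rewrite e /= => /andP [hc _].
congr cons; move: hc; rewrite /n /=.
by clear hl; case: c; case: (odd (size bw)).
Qed.

Lemma not_sorted_dup bw : ~~ sorted (fun x y : bool => x != y) bw ->
  exists p c q, bw = p ++ c :: c :: q.
Proof.
elim: bw => // c bw IH /=.
case: bw IH => // c' bw IH /= /nandP [/negPn/eqP ->|h].
  by exists [::], c', bw.
case: (IH h) => p [d [q e]]; exists (c :: p), d, q; by rewrite e.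
Qed.

Lemma Ff_cons a b ps pt c bw : Ff a b ps pt (c :: bw) = stepF a b ps pt c (Ff a b ps pt bw).
Proof. by []. Qed.

Section Rank2.
Variable I : finType.
Variable M : I -> I -> int.
Hypothesis hGCM : is_GCM M.
Variables s t : I.
Hypothesis hst : s != t.

Definition fsb (b : bool) : I := if b then s else t.

Lemma sum3 i (v : vec I) X Y :
  \sum_l M i l * (v l + X * (l == s)%:R + Y * (l == t)%:R) =
  \sum_l M i l * v l + X * M i s + Y * M i t.
Proof.
rewrite (eq_bigr (fun l => M i l * v l + (X * M i l) * (l == s)%:R + (Y * M i l) * (l == t)%:R)).
  by rewrite !big_split /= !sum_delta.
by move=> l _; ring.
Qed.

Lemma act_F bw v : act M (map fsb bw) v =
  [ffun j => v j + (Ff (M s t) (M t s) (\sum_l M s l * v l) (\sum_l M t l * v l) bw).1 * (j == s)%:R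
                 + (Ff (M s t) (M t s) (\sum_l M s l * v l) (\sum_l M t l * v l) bw).2 * (j == t)%:R].
Proof.
have [h2 _] := hGCM.
elim: bw => [|c bw IH]; first by apply/ffunP => j; rewrite !ffunE /=; ring.
rewrite map_cons act_cons IH; apply/ffunP => j; rewrite reflE !ffunE Ff_cons.
set X := (Ff _ _ _ _ bw).1; set Y := (Ff _ _ _ _ bw).2.
rewrite (eq_bigr (fun l => M (fsb c) l * (v l + X * (l == s)%:R + Y * (l == t)%:R))); last first.
  by move=> l _; rewrite ffunE.
rewrite sum3 /stepF.
case: c => /=; rewrite h2; ring.
Qed.

End Rank2.

Lemma GCM_At (I : finType) (M : I -> I -> int) : is_GCM M -> is_GCM (At M).
Proof.
case=> [h1 [h2 h3]]; split; first exact: h1.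
split; first by move=> i j ij; rewrite /At; apply: h2; rewrite eq_sym.
by move=> i j; rewrite /At; split => /h3.
Qed.

Lemma eqv_At (I : finType) (M : I -> I -> int) w1 w2 : eqv (At M) w1 w2 <-> eqv M w1 w2.
Proof. by split; case=> h1 h2; split. Qed.

Lemma sum_sb (I : finType) (M : I -> I -> int) i k : \sum_l M i l * sbasis k l = M i k.
Proof. by under eq_bigr => l _ do rewrite sbE; rewrite sum_delta. Qed.

Lemma braid_eqv (I : finType) (M : I -> I -> int) (hG : is_GCM M) (s t : I) (hst : s != t) :
  (M s t * M t s <= 3) ->
  eqv M (map (fsb s t) (Eb (mord (M s t) (M t s)))) (map (fsb s t) (Eb' (mord (M s t) (M t s)))).
Proof.
move=> h3; case: (hG) => h2 [hn hz].
have hst' : t != s by rewrite eq_sym.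
have a0 := hn _ _ hst; have b0 := hn _ _ hst'.
have hab : (M s t == 0) = (M t s == 0).
  by apply/eqP/eqP => /hz.
split=> v.
  by rewrite !act_F // braidF.
have hGt := GCM_At hG.
rewrite !act_F //.
rewrite /At [mord (M s t) _]/mord mulrC -/(mord (M t s) (M s t)) braidF //.
by rewrite mulrC.
Qed.

Lemma rank2 (I : finType) (M : I -> I -> int) (hG : is_GCM M) (s t : I) (hst : s != t)
  (bw : seq bool) :
  (forall bw', eqv M (map (fsb s t) bw') (map (fsb s t) bw) -> (size bw <= size bw')%N) ->
  (forall bz, eqv M (map (fsb s t) bz) (map (fsb s t) (rcons bw true)) -> (size bw <= size bz)%N) ->
  exists x y, [/\ 0 <= x, 0 <= y & act M (map (fsb s t) bw) (sbasis s) = lc x (sbasis s) y (sbasis t)].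
Proof.
move=> R1 R2; case: (hG) => h2 [hn hz].
have hst' : t != s by rewrite eq_sym.
have a0 := hn _ _ hst; have b0 := hn _ _ hst'.
have hab : (M s t == 0) = (M t s == 0) by apply/eqP/eqP => /hz.
have hsort : sorted (fun x y : bool => x != y) bw.
  apply/negPn/negP => ns; case: (not_sorted_dup ns) => p [c [q e]].
  have h : eqv M (map (fsb s t) (p ++ q)) (map (fsb s t) bw).
    rewrite e !map_cat /=; apply: eqv_sym; exact: eqv_cancel.
  move: (R1 _ h); rewrite e !size_cat /=; lia.
have hlast : last false bw = false.
  case E: (last false bw) => //; move: E R1 R2 hsort.
  case/lastP: bw => [//|p c]; rewrite last_rcons => -> _ R2 _.
  have h : eqv M (map (fsb s t) p) (map (fsb s t) (rcons (rcons p true) true)).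
    rewrite !map_rcons -!cats1 -catA /=; apply: eqv_sym.
    by rewrite -[map _ p in X in eqv _ _ X]cats0; exact: eqv_cancel.
  move: (R2 _ h); rewrite size_rcons; lia.
have eL := Eb_char hsort hlast; set L := size bw in eL.
rewrite act_F // !sum_sb h2.
set X := (Ff _ _ _ _ _).1; set Y := (Ff _ _ _ _ _).2.
exists (1 + X), Y.

suff [hx hy] : 0 <= 1 + X /\ 0 <= Y.
  by split => //; apply/ffunP => j; rewrite !ffunE; ring.
  have [h4|h3'] := leP 4 (M s t * M t s).
    by rewrite /X /Y eL; case: (posF_inf L a0 b0 h4).
  have h3 : M s t * M t s <= 3 by lia.
  have hL : (L < mord (M s t) (M t s))%N.
    rewrite ltnNge; apply/negP => hm.
    move: hm; set m := mord (M s t) (M t s) => hm.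
    have m1 : (0 < m)%N by rewrite /m /mord; repeat case: ifP.
    case: (Eb_suffix m (L - m)) => pre; rewrite subnK // => epre.
    case: (Eb'_last m.-1) => z []; rewrite prednK // => ez sz.
    have hb := braid_eqv hG hst h3; rewrite -/m in hb.
    have h : eqv M (map (fsb s t) (pre ++ z)) (map (fsb s t) (rcons bw true)).
      rewrite eL epre -cats1 !map_cat -catA.
      apply: eqv_sym; apply: eqv_trans (eqv_catl _ (eqv_catr _ hb)) _.
      rewrite ez map_rcons -cats1 -catA /= catA.
      by rewrite -[_ ++ map _ z in X in eqv _ _ X]cats0; exact: eqv_cancel.
    move: (R2 _ h); rewrite size_cat sz eL epre size_cat size_Eb.
    rewrite -(ltn_predK m1); lia.
  by rewrite /X /Y eL; exact: (@posF (M s t) (M t s) L a0 b0 hab h3 hL).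
Qed.

Section Humphreys.
Variable I : finType.
Variable A : I -> I -> int.
Hypothesis hG : is_GCM A.

Let h2 : forall i, A i i = 2. Proof. by case: hG. Qed.
Let h2t : forall i, At A i i = 2. Proof. by move=> i; rewrite /At h2. Qed.

Lemma nonneg_lc x y (v1 v2 : vec I) : 0 <= x -> 0 <= y -> nonneg_vec v1 -> nonneg_vec v2 ->
  nonneg_vec (lc x v1 y v2).
Proof.
move=> hx hy h1 h2' j; rewrite ffunE; apply: addr_ge0; apply: mulr_ge0 => //.
Qed.

Lemma nonneg_sb (i : I) : nonneg_vec (sbasis i).
Proof. by move=> j; rewrite sbE; case: (j == i). Qed.

Lemma len_le_cat v (bu : seq bool) s t :
  (len A (v ++ map (fsb s t) bu) <= len A v + size bu)%N.
Proof.
apply: leq_trans (len_cat _ _ _) _; rewrite leq_add2l.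
by apply: leq_trans (len_size _ _) _; rewrite size_map.
Qed.

Theorem H1 n : forall w, len A w = n -> forall i, (n <= len A (rcons w i))%N ->
  nonneg_vec (act A w (sbasis i)) /\ nonneg_vec (act (At A) w (sbasis i)).
Proof.
elim/ltn_ind: n => n IH w hw s hn.
case: n IH hw hn => [|n] IH hw hn.
  move/len0: hw => [e1 e2]; rewrite e1 e2 /=; split; exact: nonneg_sb.
case: (len_spec A w) => w0 [e0 sz0]; rewrite hw in sz0.
case/lastP: w0 e0 sz0 => [//|w1 t] e0; rewrite size_rcons => -[sz1].
have hts : t != s.
  apply/negP => /eqP ets; subst t.
  have e : eqv A (rcons w s) w1.
    rewrite -cats1; apply: eqv_trans (eqv_catr [:: s] (eqv_sym e0)) _.
    by rewrite -cats1 -catA /= -[w1 in X in eqv _ _ X]cats0; exact: eqv_cancel.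
  move: (len_min (eqv_sym e)); rewrite sz1 => h; move: (leq_trans hn h); by rewrite ltnn.
have hst : s != t by rewrite eq_sym.
pose P k := exists v bu, [/\ eqv A (v ++ map (fsb s t) bu) w,
                            (len A v + size bu <= n.+1)%N & len A v = k].
have P0 : P (len A w1).
  exists w1, [:: false]; split => //.
    by rewrite /= cats1.
  by rewrite /= addn1 ltnS -sz1; exact: len_size.
case: (nat_min (ex_intro _ _ P0)) => k [[v [bu [ev hsz hk]]] kmin].
have hlow : forall v' bu', eqv A (v' ++ map (fsb s t) bu') w ->
    (n.+1 <= len A v' + size bu')%N.
  move=> v' bu' e; rewrite -hw -(len_eqv e); exact: len_le_cat.
have hsz' : (len A v + size bu = n.+1)%N.
  by apply/eqP; rewrite eqn_leq hsz hlow.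
have hkn : (k < n.+1)%N.
  move: (kmin _ P0) (len_size A w1); rewrite sz1; lia.
have step : forall c : bool, (len A v <= len A (rcons v (fsb s t c)))%N.
  move=> c; rewrite leqNgt; apply/negP => hlt.
  have Pc : P (len A (rcons v (fsb s t c))).
    exists (rcons v (fsb s t c)), (c :: bu); split => //.
      apply: eqv_trans _ ev; rewrite /= -cats1 -catA /=; exact: eqv_cancel.
    move: hsz; rewrite /=; lia.
  move: (kmin _ Pc); rewrite -hk; lia.
have st1 : (k <= len A (rcons v s))%N by rewrite -hk; exact: (step true).
have st2 : (k <= len A (rcons v t))%N by rewrite -hk; exact: (step false).
have [IHs1 IHs2] := IH k hkn v hk s st1.
have [IHt1 IHt2] := IH k hkn v hk t st2.
have R1 : forall bu', eqv A (map (fsb s t) bu') (map (fsb s t) bu) -> (size bu <= size bu')%N.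
  move=> bu' e; have := hlow v bu' (eqv_trans (eqv_catl v e) ev); lia.
have R2 : forall bz, eqv A (map (fsb s t) bz) (map (fsb s t) (rcons bu true)) ->
    (size bu <= size bz)%N.
  move=> bz e.
  have e2 : eqv A (rcons w s) (v ++ map (fsb s t) bz).
    rewrite -cats1; apply: eqv_trans (eqv_catr [:: s] (eqv_sym ev)) _.
    rewrite -catA; apply: eqv_catl; apply: eqv_trans _ (eqv_sym e).
    by rewrite map_rcons cats1; exact: eqv_refl.
  have := leq_trans hn (leq_trans (eq_leq (len_eqv e2)) (len_le_cat v bz s t)); lia.
have [x [y [hx hy ex]]] := rank2 hG hst R1 R2.
have R1' : forall bu', eqv (At A) (map (fsb s t) bu') (map (fsb s t) bu) -> (size bu <= size bu')%N.
  by move=> bu' /eqv_At; exact: R1.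
have R2' : forall bz, eqv (At A) (map (fsb s t) bz) (map (fsb s t) (rcons bu true)) ->
    (size bu <= size bz)%N.
  by move=> bz /eqv_At; exact: R2.
have [x' [y' [hx' hy' ex']]] := rank2 (GCM_At hG) hst R1' R2'.
case: ev => ev1 ev2; split.
  by rewrite -ev1 act_cat ex act_lc; apply: nonneg_lc.
by rewrite -ev2 act_cat ex' act_lc; apply: nonneg_lc.
Qed.

Lemma refl_self (M : I -> I -> int) i : M i i = 2 ->
  refl M i (sbasis i) = lc (-1) (sbasis i) 0 (sbasis i).
Proof.
move=> hM; apply/ffunP => j; rewrite reflE !ffunE sum_sb hM; ring.
Qed.

Theorem dichotomy w i :
  (nonneg_vec (act A w (sbasis i)) /\ nonneg_vec (act (At A) w (sbasis i))) \/
  (nonpos_vec (act A w (sbasis i)) /\ nonpos_vec (act (At A) w (sbasis i))).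
Proof.
case: (leqP (len A w) (len A (rcons w i))) => h.
  by left; exact: H1.
right.
have e : eqv A (rcons (rcons w i) i) w.
  by rewrite -!cats1 -catA /= -[w in X in eqv _ _ X]cats0; exact: eqv_cancel.
have [n1 n2] := H1 (erefl _) (leq_trans (ltnW h) (eq_leq (esym (len_eqv e)))).
move: n1 n2; rewrite !act_rcons refl_self // refl_self // !act_lc => n1 n2.
split=> j; [move: (n1 j)|move: (n2 j)]; rewrite !ffunE; lia.
Qed.

End Humphreys.

Section Roots.
Variable I : finType.
Variable A : I -> I -> int.
Hypothesis hG : is_GCM A.
Implicit Types (u v g : vec I) (w : seq I).

Let h2 : forall i, A i i = 2. Proof. by case: hG. Qed.
Let hn : forall i j, i != j -> A i j <= 0. Proof. by case: hG => _ []. Qed.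
Let hz : forall i j, A i j = 0 <-> A j i = 0. Proof. by case: hG => _ []. Qed.
Let h2t : forall i, At A i i = 2. Proof. by move=> i; rewrite /At h2. Qed.

Lemma dich w i :
  (nonneg_vec (act A w (sbasis i)) /\ nonneg_vec (coact A w (sbasis i))) \/
  (nonpos_vec (act A w (sbasis i)) /\ nonpos_vec (coact A w (sbasis i))).
Proof. rewrite coact_At; exact: dichotomy. Qed.

Lemma pairing_lc_r u x v1 y v2 :
  pairing A u (lc x v1 y v2) = x * pairing A u v1 + y * pairing A u v2.
Proof.
rewrite !pairingE; under eq_bigr => k _ do rewrite sum_lc.
rewrite !mulr_sumr -big_split /=; apply: eq_bigr => k _; ring.
Qed.

Lemma pairing_root w i : pairing A (coact A w (sbasis i)) (act A w (sbasis i)) = 2.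
Proof. by rewrite pairing_inv_act // pairing_sbl sum_sb. Qed.

Lemma refl0 (M : I -> I -> int) (k : I) : refl M k (0 : vec I) = 0.
Proof.
apply/ffunP => j; rewrite reflE !ffunE big1 ?mul0r ?subr0 // => l _; by rewrite ffunE mulr0.
Qed.

Lemma act0 (M : I -> I -> int) w : act M w (0 : vec I) = 0.
Proof. by elim: w => //= a w ->; rewrite refl0. Qed.

Lemma root_nz w i : act A w (sbasis i) != 0.
Proof.
apply/negP => /eqP e.
have := act_rev_invol w (sbasis i) h2; rewrite e act0 => /ffunP /(_ i).
by rewrite !ffunE eqxx.
Qed.

Lemma coroot_nz w i : coact A w (sbasis i) != 0.
Proof.
rewrite coact_At; apply/negP => /eqP e.
have := act_rev_invol w (sbasis i) h2t; rewrite e act0 => /ffunP /(_ i).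
by rewrite !ffunE eqxx.
Qed.

Lemma nn_np0 v : nonneg_vec v -> nonpos_vec v -> v = 0.
Proof. move=> h1 h2'; apply/ffunP => j; rewrite ffunE; have := h1 j; have := h2' j; lia. Qed.

Lemma coroot_pos w i : nonneg_vec (act A w (sbasis i)) -> nonneg_vec (coact A w (sbasis i)).
Proof.
move=> h; case: (dich w i) => [[] //|[h1 _]].
by move: (root_nz w i); rewrite (nn_np0 h h1) eqxx.
Qed.

Lemma coroot_neg w i : nonpos_vec (act A w (sbasis i)) -> nonpos_vec (coact A w (sbasis i)).
Proof.
move=> h; case: (dich w i) => [[h1 _]|[] //].
by move: (root_nz w i); rewrite (nn_np0 h1 h) eqxx.
Qed.

Lemma root_pos_of_coroot w i : nonneg_vec (coact A w (sbasis i)) -> nonneg_vec (act A w (sbasis i)).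
Proof.
move=> h; case: (dich w i) => [[] //|[_ h1]].
by move: (coroot_nz w i); rewrite (nn_np0 h h1) eqxx.
Qed.

Lemma W0 (x : seq I) (i j : I) : act A x (sbasis i) = sbasis j -> coact A x (sbasis i) = sbasis j.
Proof.
move=> e.
have cpos : nonneg_vec (coact A x (sbasis i)) by apply: coroot_pos; rewrite e; exact: nonneg_sb.
have neg : nonpos_vec (act A (j :: x) (sbasis i)).
  by rewrite act_cons e refl_self // => l; rewrite !ffunE; case: (l == j).
have cneg := coroot_neg neg.
have p2 : pairing A (coact A x (sbasis i)) (sbasis j) = 2 by rewrite -e pairing_root.
move: cneg; rewrite /= => cneg.
have ez : forall l, l != j -> coact A x (sbasis i) l = 0.
  move=> l lj; move: (cneg l) (cpos l); rewrite ffunE sbE (negbTE lj) mulr0 subr0.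
  lia.
have ejj : coact A x (sbasis i) j = 1.
  move: p2; rewrite pairing_sbr (bigD1 j) //= big1 ?addr0; last first.
    by move=> l lj; rewrite ez // mul0r.
  rewrite h2; lia.
by apply/ffunP => l; rewrite sbE; case: (eqVneq l j) => [->|lj]; rewrite ?ejj ?ez.
Qed.

Lemma coact_rev_invol w u : coact A (rev w) (coact A w u) = u.
Proof. by rewrite !coact_At act_rev_invol. Qed.

Lemma act_rev_invol' w v : act A w (act A (rev w) v) = v.
Proof. by rewrite -{1}(revK w) (act_rev_invol _ _ h2). Qed.

Lemma coact_rev_invol' w u : coact A w (coact A (rev w) u) = u.
Proof. by rewrite -{1}(revK w) coact_rev_invol. Qed.

Lemma W w i w' j : act A w (sbasis i) = act A w' (sbasis j) ->
  coact A w (sbasis i) = coact A w' (sbasis j).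
Proof.
move=> e.
have e1 : act A (rev w' ++ w) (sbasis i) = sbasis j by rewrite act_cat e (act_rev_invol _ _ h2).
have := W0 e1; rewrite /coact foldr_cat -/(coact A (rev w') _) -/(coact A w _) => e2.
by rewrite -(coact_rev_invol' w' (coact A w (sbasis i))) e2.
Qed.


Definition vneg (v : vec I) : vec I := lc (-1) v 0 v.

Lemma sum_supp (F : I -> int) k : (forall l, l != k -> F l = 0) -> \sum_l F l = F k.
Proof. by move=> h; rewrite (bigD1 k) //= big1 ?addr0. Qed.

Lemma single w i k : nonneg_vec (act A w (sbasis i)) ->
  (forall l, l != k -> act A w (sbasis i) l = 0) -> act A w (sbasis i) = sbasis k.
Proof.
set g := act A w (sbasis i) => gpos gz.
have cpos := coroot_pos gpos.
have rg : refl A k g = vneg g.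
  apply/ffunP => j; rewrite reflE !ffunE (sum_supp (k := k)); last first.
    by move=> l lk; rewrite gz // mulr0.
  rewrite h2; case: (eqVneq j k) => [->|jk]; first by rewrite /= mulr1; ring.
  by rewrite gz // /= mulr0; ring.
have neg : nonpos_vec (act A (k :: w) (sbasis i)).
  by rewrite act_cons -/g rg => j; rewrite ffunE; have := gpos j; lia.
have cneg := coroot_neg neg; rewrite /= in cneg.
have cz : forall l, l != k -> coact A w (sbasis i) l = 0.
  move=> l lk; move: (cneg l) (cpos l); rewrite ffunE sbE (negbTE lk) mulr0 subr0; lia.
have p2 := pairing_root w i; rewrite -/g pairingE (sum_supp (k := k)) in p2; last first.
  by move=> l lk; rewrite cz // mul0r.
rewrite (sum_supp (k := k)) in p2; last by move=> l lk; rewrite gz // mulr0.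
rewrite h2 in p2.
have gk : g k = 1.
  move: p2 (cpos k) (gpos k); set x := coact A w (sbasis i) k; set y := g k => p2 hx hy.
  have xy : x * y = 1 by nia.
  have y0 : y != 0 by apply/eqP => y0; rewrite y0 mulr0 in xy.
  have x0 : x != 0 by apply/eqP => x0; rewrite x0 mul0r in xy.
  nia.
by apply/ffunP => l; rewrite sbE; case: (eqVneq l k) => [->|lk]; rewrite ?gk ?gz.
Qed.

Lemma root_vneg w i : vneg (act A w (sbasis i)) = act A (rcons w i) (sbasis i).
Proof. by rewrite act_rcons refl_self // act_lc. Qed.

Lemma vnegK v : vneg (vneg v) = v.
Proof. by apply/ffunP => j; rewrite !ffunE; ring. Qed.

Lemma supp_pos w i k : nonneg_vec (act A w (sbasis i)) -> act A w (sbasis i) <> sbasis k ->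
  exists l, l != k /\ act A w (sbasis i) l != 0.
Proof.
move=> gp gk.
case: (boolP [exists l, (l != k) && (act A w (sbasis i) l != 0)]).
  by case/existsP => l /andP [h1 h3]; exists l.
move/existsPn => hl; exfalso; apply: gk; apply: single => // l lk.
by move: (hl l); rewrite lk /= negbK => /eqP.
Qed.

Lemma supp_neg w i k : nonpos_vec (act A w (sbasis i)) -> act A w (sbasis i) <> vneg (sbasis k) ->
  exists l, l != k /\ act A w (sbasis i) l != 0.
Proof.
move=> gn gk.
have gp : nonneg_vec (act A (rcons w i) (sbasis i)).
  by rewrite -root_vneg => j; rewrite ffunE; have := gn j; lia.
have : act A (rcons w i) (sbasis i) <> sbasis k.
  by rewrite -root_vneg => e; apply: gk; rewrite -(vnegK (act A w _)) e.
case/(supp_pos gp) => l [lk]; rewrite -root_vneg ffunE => h; exists l; split => //.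
by apply: contra h => /eqP ->; rewrite mulr0 mul0r addr0.
Qed.

Lemma refl_sign w i k : (exists l, l != k /\ act A w (sbasis i) l != 0) ->
  (nonneg_vec (act A w (sbasis i)) -> nonneg_vec (refl A k (act A w (sbasis i)))) /\
  (nonpos_vec (act A w (sbasis i)) -> nonpos_vec (refl A k (act A w (sbasis i)))).
Proof.
case=> l [lk gl].
have rl : refl A k (act A w (sbasis i)) l = act A w (sbasis i) l.
  by rewrite reflE (negbTE lk) mulr0 subr0.
have := dich (k :: w) i; rewrite act_cons => -[[h _]|[h _]]; split => // gs.
  by move: (h l) (gs l) gl; rewrite rl; lia.
by move: (h l) (gs l) gl; rewrite rl; lia.
Qed.

Lemma conj_invol w i v : act A (conj_word w i) (act A (conj_word w i) v) = v.
Proof.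
have e : rev (conj_word w i) = conj_word w i.
  by rewrite /conj_word rev_cat rev_cons revK cat_rcons.
by rewrite -{1}e (act_rev_invol _ _ h2).
Qed.

Lemma pairing_corefl_k u k : pairing A (corefl A k u) (sbasis k) = - pairing A u (sbasis k).
Proof.
rewrite !pairing_sbr.
rewrite (eq_bigr (fun l => u l * A l k - (pairing A u (sbasis k) * A l k) * (l == k)%:R)).
  by rewrite sumrB sum_delta h2 pairing_sbr; ring.
by move=> l _; rewrite ffunE sbE; ring.
Qed.

Lemma conj_cons_act w i k v :
  act A (conj_word (k :: w) i) v = refl A k (act A (conj_word w i) (refl A k v)).
Proof. by rewrite conj_word_cons act_cons act_rcons. Qed.

Lemma is_root_refl k g : is_root A g -> is_root A (refl A k g).
Proof. by case=> w [i ->]; exists (k :: w), i. Qed.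

Lemma is_root_conj w i g : is_root A g -> is_root A (act A (conj_word w i) g).
Proof. by case=> w' [i' ->]; exists (conj_word w i ++ w'), i'; rewrite act_cat. Qed.

Lemma root_nz' g : is_root A g -> g <> 0.
Proof. by case=> w [i ->] e; move: (root_nz w i); rewrite e eqxx. Qed.

Lemma quantum_one b w0 i0 : pos_root A b -> b = act A w0 (sbasis i0) ->
  (forall g, pos_root A g -> neg_root A (act A (conj_word w0 i0) g) -> g <> b ->
     pairing A (coact A w0 (sbasis i0)) g = 1) -> is_quantum A b.
Proof.
move=> pb eb h; split => // w i e g pg ng gb.
have ec : coact A w (sbasis i) = coact A w0 (sbasis i0) by apply: W; rewrite -e -eb.
rewrite ec; apply: h => //.
by move: ng; rewrite !conj_formula // ec -e -eb.
Qed.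

Lemma pos_root_refl g k : pos_root A g -> g <> sbasis k -> pos_root A (refl A k g).
Proof.
case=> -[w [i eg]] gp gk; split; first by apply: is_root_refl; exists w, i.
rewrite eg in gp gk *; case: (refl_sign (supp_pos gp gk)) => h _; exact: h.
Qed.

Lemma neg_root_refl h k : neg_root A h -> h <> vneg (sbasis k) -> neg_root A (refl A k h).
Proof.
case=> -[w [i eh]] hp hk; split; first by apply: is_root_refl; exists w, i.
rewrite eh in hp hk *; case: (refl_sign (supp_neg hp hk)) => _ h'; exact: h'.
Qed.

Lemma not_pos_neg g : pos_root A g -> neg_root A g -> False.
Proof. by case=> r p [_ n]; apply: (root_nz' r); apply: nn_np0. Qed.

Lemma simple_quantum i : is_quantum A (sbasis i).
Proof.
have ps : pos_root A (sbasis i) by split; [exists [::], i | exact: nonneg_sb].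
apply: (quantum_one (w0 := [::]) (i0 := i)) => // g pg ng gi.
exfalso; apply: (not_pos_neg _ ng); rewrite /conj_word /=.
by apply: pos_root_refl.
Qed.

End Roots.

Section Quantum.
Variable I : finType.
Variable A : I -> I -> int.
Hypothesis hG : is_GCM A.
Implicit Types (u v g : vec I) (w : seq I).

Let h2 : forall i, A i i = 2. Proof. by case: hG. Qed.

Lemma lcE x v1 y v2 (j : I) : lc x v1 y v2 j = x * v1 j + y * v2 j.
Proof. by rewrite ffunE. Qed.

Lemma refl_sbk k : refl A k (sbasis k) = vneg (sbasis k).
Proof. exact: refl_self. Qed.

Lemma pairing_vneg u v : pairing A u (vneg v) = - pairing A u v.
Proof. by rewrite /vneg pairing_lc_r; ring. Qed.

Lemma up w i k : is_quantum A (act A w (sbasis i)) ->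
  pairing A (coact A w (sbasis i)) (sbasis k) = -1 ->
  is_quantum A (act A (k :: w) (sbasis i)).
Proof.
set b0 := act A w (sbasis i); set c0 := coact A w (sbasis i) => qb0 p0.
have c0pos : nonneg_vec c0 by apply: coroot_pos => //; case: qb0 => -[]. 
have pb : pos_root A (act A (k :: w) (sbasis i)).
  split; first by exists (k :: w), i.
  apply: root_pos_of_coroot => // j; rewrite /= -/c0 ffunE sbE p0.
  by have := c0pos j; case: (j == k) => /=; lia.
apply: (quantum_one hG pb (erefl _)) => g pg ng gb.
rewrite /= -/c0.
case: (eqVneq g (sbasis k)) => [->|gk].
  by rewrite pairing_corefl_k // p0.
have pg' := pos_root_refl hG pg (elimN eqP gk).
move: ng; rewrite conj_cons_act; set h := act A (conj_word w i) (refl A k g) => ng.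
have e' : refl A k (act A (conj_word (k :: w) i) g) = h.
  by rewrite conj_cons_act refl_invol.
have [hk|hk] := eqVneq (act A (conj_word (k :: w) i) g) (vneg (sbasis k)).
  have eh : h = sbasis k.
    rewrite -e' hk /vneg refl_lc refl_sbk; apply/ffunP => j; rewrite !ffunE; ring.
  have eg' : refl A k g = lc 1 (sbasis k) 1 b0.
    rewrite -(conj_invol hG w i (refl A k g)) -/h eh conj_formula // -/c0 -/b0 p0.
    by apply/ffunP => j; rewrite !ffunE; ring.
  have -> : g = lc 1 (vneg (sbasis k)) 1 (act A (k :: w) (sbasis i)).
    by rewrite -(refl_invol g (h2 k)) eg' refl_lc refl_sbk.
  have pr := pairing_root hG (k :: w) i; rewrite /= -/c0 in pr.
  rewrite pairing_lc_r pairing_vneg pairing_corefl_k // p0 pr; ring.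
have nh : neg_root A h.
  rewrite -e'; rewrite conj_cons_act in hk ng *; apply: neg_root_refl => //.
  by move/eqP: hk.
have g'b : refl A k g <> b0.
  by move=> e; apply: gb; rewrite -(refl_invol g (h2 k)) e.
case: qb0 => _ /(_ w i (erefl _) _ pg' nh g'b); rewrite -/c0 => q1.
by rewrite -(refl_invol g (h2 k)) pairing_inv.
Qed.


Lemma root_dich g : is_root A g -> nonneg_vec g \/ nonpos_vec g.
Proof. by case=> w [i ->]; case: (dich hG w i) => -[h _]; [left|right]. Qed.

Lemma down w i k : is_quantum A (act A w (sbasis i)) ->
  0 < pairing A (coact A w (sbasis i)) (sbasis k) ->
  act A w (sbasis i) <> sbasis k ->
  pairing A (coact A w (sbasis i)) (sbasis k) = 1 /\ is_quantum A (act A (k :: w) (sbasis i)).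
Proof.
set b := act A w (sbasis i); set c := coact A w (sbasis i); set p := pairing A c (sbasis k).
move=> qb pp bk; have [pb qh] := qb.
have psk : pos_root A (sbasis k) by split; [exists [::], k | exact: nonneg_sb].
have p1 : p = 1.
  apply: (qh w i (erefl _) (sbasis k) psk) => //; last by move=> e; apply: bk.
  split; first by apply: is_root_conj; exists [::], k.
  have [l [lk bl]] := supp_pos hG (proj2 pb) bk.
  have bl' : 0 < b l by move: (proj2 pb l) bl; rewrite /b; lia.
  case: (root_dich (is_root_conj w i (ex_intro _ [::] (ex_intro _ k erefl)))) => // hn.
  move: (hn l); rewrite conj_formula // -/b -/c -/p !ffunE (negbTE lk) /=.
  move: pp bl'; nia.
split => //.
have pb1 : pos_root A (act A (k :: w) (sbasis i)) by apply: pos_root_refl.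
apply: (quantum_one hG pb1 (erefl _)) => g pg ng gb1.
rewrite /= -/c.
have gk : g <> sbasis k.
  move=> e; move: ng; rewrite e conj_formula // => ng.
  apply: (not_pos_neg hG _ ng); split; first by case: ng.
  have e3 : pairing A (coact A (k :: w) (sbasis i)) (sbasis k) = -1.
    by rewrite [coact _ _ _]/= -/c pairing_corefl_k // -/p p1.
  move=> j; rewrite e3 lcE sbE.
  by have := proj2 pb1 j; case: (j == k) => /=; lia.
have pg' := pos_root_refl hG pg gk.
set s1g := act A (conj_word (k :: w) i) g in ng.
have e' : refl A k s1g = act A (conj_word w i) (refl A k g).
  by rewrite /s1g conj_cons_act refl_invol.
have [hk|hk] := eqVneq s1g (vneg (sbasis k)).
  have ea : refl A k (vneg (sbasis k)) = sbasis k.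
    rewrite /vneg refl_lc refl_sbk; apply/ffunP => j; rewrite !lcE; ring.
  have eg' : refl A k g = lc 1 (sbasis k) (-1) b.
    by rewrite -(conj_invol hG w i (refl A k g)) -e' hk ea conj_formula // -/b -/c -/p p1.
  exfalso; apply: (not_pos_neg hG pg); split; first by case: pg.
  have -> : g = lc 1 (vneg (sbasis k)) (-1) (act A (k :: w) (sbasis i)).
    by rewrite -(refl_invol g (h2 k)) eg' refl_lc refl_sbk.
  move=> j; rewrite !lcE sbE; have := proj2 pb1 j; case: (j == k) => /=; lia.
have nh : neg_root A (act A (conj_word w i) (refl A k g)).
  by rewrite -e'; apply: neg_root_refl => //; move/eqP: hk.
have g'b : refl A k g <> b.
  by move=> e; apply: gb1; rewrite -(refl_invol g (h2 k)) e.
have q1 := qh w i (erefl _) _ pg' nh g'b; rewrite -/c in q1.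
by rewrite -(refl_invol g (h2 k)) pairing_inv.
Qed.

End Quantum.

Section QcSec.
Variable I : finType.
Variable A : I -> I -> int.
Hypothesis hG : is_GCM A.
Implicit Types (u v x y g : vec I) (w : seq I).

Let h2 : forall i, A i i = 2. Proof. by case: hG. Qed.
Let hn : forall i j, i != j -> A i j <= 0. Proof. by case: hG => _ []. Qed.
Let hz : forall i j, A i j = 0 <-> A j i = 0. Proof. by case: hG => _ []. Qed.
Let h2t : forall i, At A i i = 2. Proof. by move=> i; rewrite /At h2. Qed.

Inductive Qc : vec I -> Prop :=
| Qc_s i : Qc (sbasis i)
| Qc_u x k : Qc x -> pairing A x (sbasis k) = -1 -> Qc (corefl A k x).

Lemma coreflE u k j : corefl A k u j = u j - pairing A u (sbasis k) * (j == k)%:R.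
Proof. by rewrite ffunE sbE. Qed.

Lemma corefl_invol u k : corefl A k (corefl A k u) = u.
Proof. by rewrite !corefl_At refl_invol. Qed.

Lemma tmp_ring (a b c d : int) : (a - b * c) * d = a * d - (b * d) * c.
Proof. by ring. Qed.

Lemma pairing_corefl u k m :
  pairing A (corefl A k u) (sbasis m) = pairing A u (sbasis m) - pairing A u (sbasis k) * A k m.
Proof.
rewrite [LHS]pairing_sbr [pairing A u (sbasis m)]pairing_sbr.
under eq_bigr => l _ do rewrite coreflE tmp_ring.
by rewrite sumrB sum_delta.
Qed.

Lemma Qc_real x : Qc x -> exists w i, x = coact A w (sbasis i) /\ is_quantum A (act A w (sbasis i)).
Proof.
elim=> [i|y k _ [w [i [ey qy]]] hp].
  by exists [::], i; split => //; exact: simple_quantum.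
exists (k :: w), i; split; first by rewrite ey.
by apply: up => //; rewrite -ey.
Qed.

Lemma pairing_sum c b : pairing A c b = \sum_l b l * pairing A c (sbasis l).
Proof.
under [RHS]eq_bigr => l _ do rewrite pairing_sbr mulr_sumr.
rewrite /pairing [RHS]exchange_big; apply: eq_bigr => k _; apply: eq_bigr => l _; ring.
Qed.

Lemma quantum_Qc n : forall w i, is_quantum A (act A w (sbasis i)) ->
  \sum_j coact A w (sbasis i) j <= n%:Z -> Qc (coact A w (sbasis i)).
Proof.
elim: n => [|n IH] w i qb hs.
  have cp : nonneg_vec (coact A w (sbasis i)) by apply: coroot_pos => //; case: qb => -[].
  have : coact A w (sbasis i) = 0.
    apply/ffunP => j; rewrite ffunE; apply/eqP; rewrite eq_le cp andbT.
    apply: le_trans hs; rewrite (bigD1 j) //= lerDl; apply: sumr_ge0 => l _; exact: cp.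
  by move=> e; move: (coroot_nz hG w i); rewrite e eqxx.
have cp : nonneg_vec (coact A w (sbasis i)) by apply: coroot_pos => //; case: qb => -[].
have bp : nonneg_vec (act A w (sbasis i)) by case: qb => -[].
case: (boolP [exists l, act A w (sbasis i) == sbasis l]).
  by case/existsP => l /eqP e; rewrite (W0 hG e); exact: Qc_s.
move/existsPn => nsimple.
case: (boolP [exists k, (0 < act A w (sbasis i) k) && (0 < pairing A (coact A w (sbasis i)) (sbasis k))]); last first.
  move/existsPn => h; exfalso.
  have := pairing_root hG w i; rewrite pairing_sum => e.
  suff : \sum_l act A w (sbasis i) l * pairing A (coact A w (sbasis i)) (sbasis l) <= 0.
    by rewrite e.
  apply: sumr_le0 => l _; move: (h l) (bp l); rewrite negb_and -!leNgt.
  case/orP => h1 h3; last exact: mulr_ge0_le0.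
  have h0 : act A w (sbasis i) l = 0 by lia.
  by rewrite h0 mul0r.
case/existsP => k /andP [bk pk].
have bnk : act A w (sbasis i) <> sbasis k by move=> e; move: (nsimple k); rewrite e eqxx.
have [p1 q1] := down hG qb pk bnk.
have e1 : coact A (k :: w) (sbasis i) = corefl A k (coact A w (sbasis i)) by [].
have hs1 : \sum_j coact A (k :: w) (sbasis i) j <= n%:Z.
  rewrite e1.
  rewrite (eq_bigr (fun j => coact A w (sbasis i) j - (j == k)%:R)); last first.
    by move=> j _; rewrite coreflE p1 mul1r.
  rewrite sumrB.
  have -> : \sum_(j : I) ((j == k)%:R : int) = 1.
    by rewrite (eq_bigr (fun j => 1 * (j == k)%:R)) ?sum_delta // => j _; rewrite mul1r.
  move: hs; rewrite -[n.+1]addn1 PoszD; set S := \sum_(j : I) _; lia.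
have := IH _ _ q1 hs1; rewrite e1 => Q1.
rewrite -(corefl_invol (coact A w (sbasis i)) k).
apply: Qc_u => //; by rewrite pairing_corefl_k // p1.
Qed.


Lemma Qc_nonneg x : Qc x -> nonneg_vec x.
Proof.
elim=> [i|y k _ IH hp] j; first exact: nonneg_sb.
by rewrite coreflE hp; have := IH j; case: (j == k) => /=; lia.
Qed.

Lemma Qc_le1 (i j : I) : sbasis i j <= 1 :> int.
Proof. by rewrite sbE; case: (j == i). Qed.

Lemma single_term (F : I -> int) k1 : (forall l, F l <= 0) -> \sum_l F l <= F k1.
Proof.
move=> h; rewrite (bigD1 k1) //= gerDl; apply: sumr_le0 => l _; exact: h.
Qed.

Lemma claim x : Qc x -> (exists k, 2 <= x k) ->
  exists k, [/\ 2 <= x k, pairing A x (sbasis k) = 1 & Qc (corefl A k x)].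
Proof.
elim=> [i [k hk]|y k Qy IH hp [k0 hk0]].
  by move: (Qc_le1 i k) hk; lia.
have yp := Qc_nonneg Qy.
case: (lerP 2 (corefl A k y k)) => hk.
  exists k; split => //; first by rewrite pairing_corefl_k // hp.
  by rewrite corefl_invol.
have yk0 : y k = 0.
  by move: hk (yp k); rewrite coreflE hp eqxx /=; lia.
have k0k : k0 != k by apply/eqP => e; move: hk0 hk; rewrite e; lia.
have hy0 : 2 <= y k0 by move: hk0; rewrite coreflE hp (negbTE k0k) mulr0 subr0.
have [k1 [hk1 p1 Q1]] := IH (ex_intro _ k0 hy0).
have k1k : k1 != k by apply/eqP => e; move: hk1; rewrite e yk0.
have Ak1k : A k1 k = 0.
  have : \sum_l y l * A l k <= y k1 * A k1 k.
    apply: single_term => l; case: (eqVneq l k) => [->|lk]; first by rewrite yk0 mul0r.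
    by apply: mulr_ge0_le0; [exact: yp | exact: hn].
  rewrite -pairing_sbr hp => h.
  have := hn k1k; nia.
have Akk1 : A k k1 = 0 by apply/hz.
exists k1; split.
- by rewrite coreflE hp (negbTE k1k) mulr0 subr0.
- by rewrite pairing_corefl p1 hp Akk1; ring.
- have e : corefl A k1 (corefl A k y) = corefl A k (corefl A k1 y).
    apply/ffunP => j; rewrite !coreflE pairing_corefl p1 hp Akk1.
    rewrite pairing_corefl hp p1 Ak1k; ring.
  rewrite e; apply: Qc_u => //.
  by rewrite pairing_corefl p1 hp Ak1k; ring.
Qed.

Lemma Qc_pos x : Qc x -> exists j, 1 <= x j.
Proof.
case=> [i|y k Qy hp]; first by exists i; rewrite sbE eqxx.
exists k; rewrite coreflE hp eqxx /=; have := Qc_nonneg Qy k; lia.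
Qed.

Definition ge1 (z : int) : int := (((1 <= z)%R : bool) : nat)%:R.

Lemma ge1_1 z : 1 <= z -> ge1 z = 1.
Proof. by rewrite /ge1 => ->. Qed.

Definition comb x x' : vec I := [ffun j => x j + x' j - ge1 (x j)].

Lemma lemmaX n : forall x x', Qc x -> Qc x' -> \sum_j x j <= n%:Z ->
  (forall j, (1 <= x j) = (1 <= x' j)) ->
  (forall j, ~~ ((2 <= x j) && (2 <= x' j))) ->
  (forall a b, 2 <= x a -> 2 <= x' b -> A a b = 0) ->
  Qc (comb x x').
Proof.
elim: n => [|n IH] x x' Qx Qx' hs h1 h2' h3.
  have xp := Qc_nonneg Qx.
  have x0 : forall j, x j = 0.
    move=> j; apply/eqP; rewrite eq_le xp andbT; apply: le_trans hs.
    rewrite (bigD1 j) //= lerDl; apply: sumr_ge0 => l _; exact: xp.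
  by case: (Qc_pos Qx) => j; rewrite x0.
have xp := Qc_nonneg Qx; have xp' := Qc_nonneg Qx'.
case: (boolP [exists k, 2 <= x k]); last first.
  move/existsPn => hx.
  have -> : comb x x' = x'.
    apply/ffunP => j; rewrite ffunE; move: (hx j) (xp j); rewrite -ltNge.
    by rewrite /ge1; case: (lerP 1 (x j)) => /= h; lia.
  exact: Qx'.
case/existsP => k0 hk0; have [k [hk pk Q0]] := claim Qx (ex_intro _ k0 hk0).
set x0 := corefl A k x in Q0.
have ex0 : forall j, x0 j = x j - (j == k)%:R by move=> j; rewrite coreflE pk mul1r.
have IH0 := IH x0 x' Q0 Qx'.
have hs0 : \sum_j x0 j <= n%:Z.
  rewrite (eq_bigr (fun j => x j - (j == k)%:R)) // sumrB.
  have -> : \sum_(j : I) ((j == k)%:R : int) = 1.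
    by rewrite (eq_bigr (fun j => 1 * (j == k)%:R)) ?sum_delta // => j _; rewrite mul1r.
  move: hs; rewrite -[n.+1]addn1 PoszD; set S := \sum_(j : I) _; lia.
have h10 : forall j, (1 <= x0 j) = (1 <= x' j).
  move=> j; rewrite -h1 ex0; case: (eqVneq j k) => [->|jk] /=; last by rewrite subr0.
  by apply/idP/idP; lia.
have h20 : forall j, ~~ ((2 <= x0 j) && (2 <= x' j)).
  move=> j; apply: contra (h2' j); rewrite ex0 => /andP [a b]; rewrite b andbT.
  by case: (j == k) a => /=; lia.
have h30 : forall a b, 2 <= x0 a -> 2 <= x' b -> A a b = 0.
  move=> a b ha hb; apply: h3 => //; move: ha; rewrite ex0; case: (a == k) => /=; lia.
have Qz := IH0 hs0 h10 h20 h30.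
have pz : pairing A (comb x0 x') (sbasis k) = -1.
  rewrite pairing_sbr.
  rewrite (eq_bigr (fun l => x0 l * A l k + (x' l - ge1 (x' l)) * A l k)); last first.
    by move=> l _; rewrite ffunE /ge1 h10; ring.
  rewrite big_split /= -pairing_sbr pairing_corefl_k // pk.
  rewrite big1 ?addr0 // => l _.
  case: (lerP 2 (x' l)) => hl.
    by rewrite (proj1 (hz _ _) (h3 _ _ hk hl)) mulr0.
  have hx' := xp' l; rewrite /ge1; case: (lerP 1 (x' l)) => /= h'.
    have e1 : x' l = 1 by lia.
    by rewrite e1 subrr mul0r.
  have e1 : x' l = 0 by lia.
  by rewrite e1 subr0 mul0r.
have -> : comb x x' = corefl A k (comb x0 x').
  apply/ffunP => j; rewrite coreflE pz !ffunE pk.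
  case: (eqVneq j k) => [->|jk] /=; last by rewrite !mulr0 !subr0.
  rewrite !mulr1 !ge1_1; [ring | lia | lia].
exact: Qc_u.
Qed.

End QcSec.

Lemma le_absz (x : int) : x <= (`|x|%N)%:Z.
Proof. rewrite abszE; exact: ler_norm. Qed.

Lemma sum_sb_in (I : finType) (S : {set I}) (j : I) :
  \sum_(i in S) sbasis i j = ((j \in S) : nat)%:R.
Proof.
under eq_bigr => i _ do rewrite sbE.
case: (boolP (j \in S)) => hj.
  rewrite (bigD1 j) //= eqxx big1 ?addr0 // => i /andP [_ ij].
  by rewrite eq_sym (negbTE ij).
rewrite big1 // => i iS; case: (eqVneq j i) => // e; by move: hj; rewrite e iS.
Qed.

Unset Implicit Arguments.

Theorem lemma2p27 (I : finType) (A : I -> I -> int) (hA : is_GCM A)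
  (b b' c c' : vec I) :
  is_quantum A b -> is_quantum A b' ->
  coroot_of A b c -> coroot_of A b' c' ->
  In_set 1 c = In_set 1 c' ->
  In_set 2 c :&: In_set 2 c' = set0 ->
  (forall i i', i \in In_set 2 c -> i' \in In_set 2 c' -> A i i' = 0) ->
  exists b'' c'' : vec I,
    [/\ is_quantum A b'', coroot_of A b'' c'',
        c'' = [ffun j => c j + c' j - \sum_(i in In_set 1 c) sbasis i j]
      & forall n : nat, (1 <= n)%N ->
          In_set n c'' = In_set n c :|: In_set n c'].
Proof.
move=> qb qb' [w [i [eb ec]]] [w' [i' [eb' ec']]] h1 h2 h3.
have Qx : Qc A c.
  rewrite ec; apply: (quantum_Qc hA (n := absz (\sum_j c j))); first by rewrite -eb.
  by rewrite -ec; exact: le_absz.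
have Qx' : Qc A c'.
  rewrite ec'; apply: (quantum_Qc hA (n := absz (\sum_j c' j))); first by rewrite -eb'.
  by rewrite -ec'; exact: le_absz.
have h1' : forall j, (1 <= c j) = (1 <= c' j).
  by move=> j; move/setP: h1 => /(_ j); rewrite !inE.
have h2' : forall j, ~~ ((2 <= c j) && (2 <= c' j)).
  by move=> j; move/setP: h2 => /(_ j); rewrite !inE => ->.
have h3' : forall a b, 2 <= c a -> 2 <= c' b -> A a b = 0.
  by move=> a b0 ha hb; apply: h3; rewrite inE.
have Qz := lemmaX hA Qx Qx' (le_absz _) h1' h2' h3'.
have [w'' [i'' [e'' q'']]] := Qc_real hA Qz.
exists (act A w'' (sbasis i'')), (coact A w'' (sbasis i'')); split => //.
- by exists w'', i''.
- rewrite -e''; apply/ffunP => j; rewrite !ffunE sum_sb_in inE.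
  by rewrite /ge1.
- move=> n hn; apply/setP => j; rewrite !inE -e'' ffunE /ge1.
  move: (h1' j) (h2' j); case: (lerP 1 (c j)) => /= hc; case: (lerP 1 (c' j)) => //= hc' _.
    rewrite negb_and -!ltNge => h; lia.
  move=> _; lia.
Qed.
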